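(* Let $(x^*,y^* )$ be an optimal solution of the LP relaxation of forest cover, $G^*$ the subgraph with vertex set $\{i: x^*_i>0\}$ and edge set $\{(i,j): y^*_{ij}>0\}$, and $C=(V_C,E_C)$ a connected component of $G^*$ with at least one edge. Let $e_1,\dots,e_{|E_C|}$ be the edges of $C$ in the order (nondecreasing weight) in which Kruskal's algorithm considers them when computing the minimum spanning tree $M$ of $C$, and let $T$ be the tree obtained from $M$ by deleting every degree-one vertex $i$ of $M$ with $x^*_i<1/2$ together with its incident edge. For $1\le r\le|E_C|$ let $H_r$ be the graph with edge set $E_{H_r}=\{e_1,\dots,e_r\}$ and vertex set $V_{H_r}$ the endpoints of these edges, with connected components $S^1_r,\dots,S^k_r$, and let $T^f_r$ be the graph whose edges $E_{T^f_r}$ are the edges of $S^f_r$ belonging to $T$ and whose vertices $V_{T^f_r}$ are their endpoints. Then $$\sum_{i\in V_{H_r}}x^*_i-\sum_{(i,j)\in E_{H_r}}y^*_{ij}\;\ge\;\sum_{f=1}^k\big(|V_{T^f_r}|-|E_{T^f_r}|\big).$$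
   Context: Graph $G=(V,E)$ with edge weights $w:E\to[0,1]$. For $S\subseteq V$, $E(S)$ denotes the edges with both endpoints in $S$. The LP relaxation of forest cover: minimize $\sum_{i\in V}x_i-\sum_{(i,j)\in E}y_{ij}(1-w_{ij})$ subject to $x_i+x_j\ge1$ and $x_i\ge y_{ij}$, $x_j\ge y_{ij}$ for all $(i,j)\in E$; $\sum_{i\in S}x_i-\sum_{(i,j)\in E(S)}y_{ij}\ge1$ for all $S\subseteq V$ with $E(S)\ne\emptyset$; $0\le x,y\le1$. *)

(* Defs.v *)
From HB Require Import structures.
From mathcomp Require Import all_boot all_order all_algebra.
From mathcomp Require Import reals.
Set Implicit Arguments. Unset Strict Implicit. Unset Printing Implicit Defensive.
Import Order.TTheory GRing.Theory Num.Theory.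
Local Open Scope ring_scope.

(* Graphs: vertex type V (finType); an edge is a 2-element vertex set {i,j};
   an edge set is F : {set {set V}}. *)

Section Defs.
Variable V : finType.

Definition simple_graph (E : {set {set V}}) : Prop :=
  forall e, e \in E -> #|e| = 2%N.

Definition adj (F : {set {set V}}) : rel V :=
  fun u v => (u != v) && ([set u; v] \in F).

Definition verts (F : {set {set V}}) : {set V} := \bigcup_(e in F) e.

Definition induced (E : {set {set V}}) (S : {set V}) : {set {set V}} :=
  [set e in E | e \subset S].

Variable R : realType.

Definition lp_feasible (E : {set {set V}}) (x : V -> R) (y : {set V} -> R) : Prop :=
  [/\ (forall i j, i != j -> [set i; j] \in E ->
         [/\ 1 <= x i + x j, y [set i; j] <= x i & y [set i; j] <= x j]),
      (forall S : {set V}, induced E S != set0 ->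
         1 <= \sum_(i in S) x i - \sum_(e in induced E S) y e),
      (forall i, 0 <= x i <= 1) &
      (forall e, e \in E -> 0 <= y e <= 1)].

Definition lp_obj (E : {set {set V}}) (w : {set V} -> R)
  (x : V -> R) (y : {set V} -> R) : R :=
  \sum_i x i - \sum_(e in E) y e * (1 - w e).

Definition lp_optimal E w x y : Prop :=
  lp_feasible E x y /\
  forall x' y', lp_feasible E x' y' -> lp_obj E w x y <= lp_obj E w x' y'.

Definition Gstar_verts (x : V -> R) : {set V} := [set i | 0 < x i].
Definition Gstar_edges (E : {set {set V}}) (y : {set V} -> R) : {set {set V}} :=
  [set e in E | 0 < y e].

Definition is_component (Es : {set {set V}}) (Vs VC : {set V}) : Prop :=
  exists2 u, u \in Vs & VC = [set v in Vs | connect (adj Es) u v].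

Definition kruskal (s : seq {set V}) : {set {set V}} :=
  foldl (fun (F : {set {set V}}) (e : {set V}) =>
    if [forall u in e, forall v in e, connect (adj F) u v] then F else e |: F)
    set0 s.

Definition degree (F : {set {set V}}) (i : V) : nat := #|[set e in F | i \in e]|.

(* T: delete from M every degree-one vertex i (degree in M) with x i < 1/2,
   together with its incident edge *)
Definition prune (x : V -> R) (M : {set {set V}}) : {set {set V}} :=
  [set e in M | [forall i in e, ~~ ((degree M i == 1%N) && (x i < 2^-1))]].

Definition components (F : {set {set V}}) : {set {set V}} :=
  [set [set v in verts F | connect (adj F) u v] | u in verts F].

Definition tree_part (T F : {set {set V}}) (S : {set V}) : {set {set V}} :=
  [set e in F | (e \subset S) && (e \in T)].

End Defs.

(* Main.v *)
Require Import Defs.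
From HB Require Import structures.
From mathcomp Require Import all_boot all_order all_algebra.
From mathcomp Require Import reals zify lra.
Import Order.TTheory GRing.Theory Num.Theory.
Set Implicit Arguments. Unset Strict Implicit. Unset Printing Implicit Defensive.

Section G.
Variable V : finType.
Implicit Types (F EH M Q : {set {set V}}) (e f : {set V}) (u v a b : V).

Lemma adj_sym F : symmetric (adj F).
Proof. by move=> u v; rewrite /adj eq_sym setUC. Qed.

Lemma csym F : connect_sym (adj F).
Proof. exact/sym_connect_sym/adj_sym. Qed.

Lemma connect_closed (r : rel V) (X : {set V}) u v :
  u \in X -> (forall a b, a \in X -> r a b -> b \in X) -> connect r u v -> v \in X.
Proof.
move=> uX cl /connectP [p pp ->]; elim: p u uX pp => //= c p IH u uX /andP [ruA pa].
exact: IH (cl _ _ uX ruA) pa.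
Qed.

Lemma edge2 e u v : #|e| = 2 -> u \in e -> v \in e -> u != v -> e = [set u; v].
Proof.
move=> c2 ue ve uv; apply/esym/eqP; rewrite eqEcard c2 cards2 uv andbT.
by rewrite subUset !sub1set ue ve.
Qed.

Lemma adj_mono F F' u v : F \subset F' -> connect (adj F) u v -> connect (adj F') u v.
Proof.
move=> sF; apply: connect_sub => a b /andP [ab H]; apply: connect1.
by rewrite /adj ab (subsetP sF).
Qed.

Definition kstep F e :=
  if [forall u in e, forall v in e, connect (adj F) u v] then F else e |: F.

Lemma kruskalE (t : seq {set V}) : kruskal t = foldl kstep set0 t.
Proof. by []. Qed.

Lemma kfold_sub (t : seq {set V}) F0 : foldl kstep F0 t \subset F0 :|: [set f | f \in t].
Proof.
elim: t F0 => [|f t IH] F0 /=; first by rewrite subsetUl.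
apply: subset_trans (IH _) _; apply/subsetP => g.
rewrite /kstep; case: ifP => _; rewrite !inE.
  by case/orP=> -> //; rewrite !orbT.
by rewrite -!orbA; case/or3P=> ->; rewrite ?orbT.
Qed.

Lemma kfold_mono (t : seq {set V}) F0 : F0 \subset foldl kstep F0 t.
Proof.
elim: t F0 => [|f t IH] F0 //=; apply: subset_trans (IH _).
by rewrite /kstep; case: ifP => _ //; exact: subsetUr.
Qed.

Lemma kstep_conn F f u v : #|f| = 2 -> u \in f -> v \in f ->
  connect (adj (kstep F f)) u v.
Proof.
move=> c2 uf vf; rewrite /kstep; case: ifP => [/forallP /(_ u)|_].
  by rewrite uf => /forallP /(_ v); rewrite vf.
have [->|uv] := eqVneq u v; first exact: connect0.
apply: connect1; rewrite /adj uv -(edge2 c2 uf vf uv) setU11 //.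
Qed.

Lemma kfold_conn (t : seq {set V}) F0 f u v : (forall g, g \in t -> #|g| = 2) ->
  f \in t -> u \in f -> v \in f -> connect (adj (foldl kstep F0 t)) u v.
Proof.
elim: t F0 => [|g t IH] F0 //= c2 ; rewrite inE => /orP [/eqP->|ft] uf vf.
  apply: adj_mono (kfold_mono _ _) _; apply: kstep_conn => //; apply: c2.
  by rewrite inE eqxx.
by apply: IH => // h ht; apply: c2; rewrite inE ht orbT.
Qed.

Definition comp F u := [set v | connect (adj F) u v].
Definition edgesin F (X : {set V}) := [set f in F | f \subset X].
Definition Count F := forall u, #|comp F u| <= #|edgesin F (comp F u)|.+1.

Lemma Count0 : Count set0.
Proof.
move=> u; suff -> : comp set0 u = [set u] by rewrite cards1.
apply/setP => v; rewrite !inE; apply/idP/idP => [|/eqP->]; last exact: connect0.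
have := @connect_closed (adj set0) [set u] u v; rewrite !inE eqxx => H.
by apply: H => // a b _; rewrite /adj in_set0 andbF.
Qed.

Lemma kstep_count F e : #|e| = 2 -> (forall f, f \in F -> #|f| = 2) ->
  Count F -> Count (kstep F e).
Proof.
move=> c2 cF CF; rewrite /kstep; case: ifP => [_ //| Hn].
have /cards2P [a [b [ab De]]] : #|e| == 2 by rewrite c2.
set F' := e |: F.
have nab : ~~ connect (adj F) a b.
  apply: contraFN Hn => cab; apply/forallP => u; apply/implyP.
  rewrite De => /set2P Hu; apply/forallP=> v; apply/implyP=> /set2P Hv.
  by case: Hu Hv => -> [] ->; rewrite ?connect0 // csym.
have mono u v : connect (adj F) u v -> connect (adj F') u v.
  by apply: adj_mono; apply/subsetP => f fF; rewrite /F' setU1r.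
have adjab : adj F' a b by rewrite /adj ab -De /F' setU11.
have stepF' v w : adj F' v w -> adj F v w \/ (v \in e /\ w \in e).
  move=> /andP [vw]; case/setU1P => [Hvw|HF]; last by left; rewrite /adj vw HF.
  by right; rewrite -Hvw !inE !eqxx ?orbT.
have ine v : v \in e -> v = a \/ v = b by rewrite De => /set2P.
move=> u; case H: (connect (adj F) u a || connect (adj F) u b).
  have [Ha Hb] : connect (adj F') u a /\ connect (adj F') u b.
    case/orP: H => H.
      by split; [exact: mono H | exact: connect_trans (mono _ _ H) (connect1 adjab)].
    split; last exact: mono H.
    by apply: connect_trans (mono _ _ H) (connect1 _); rewrite adj_sym.
  set A := edgesin F (comp F a); set B := edgesin F (comp F b).
  have sub1 : comp F' u \subset comp F a :|: comp F b.
    apply/subsetP => v; rewrite inE; apply: connect_closed.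
      by rewrite !inE; case/orP: H => c; apply/orP; [left|right]; rewrite csym.
    move=> v1 w vX /stepF' [adjF|[_ /ine [->|->]]]; last first.
    - by rewrite !inE connect0 orbT.
    - by rewrite !inE connect0.
    rewrite !inE in vX *; case/orP: vX => c.
      by rewrite (connect_trans c (connect1 adjF)).
    by rewrite (connect_trans c (connect1 adjF)) orbT.
  have AB0 : A :&: B = set0.
    apply/setP => f; rewrite !inE; apply/negbTE/negP.
    case/andP=> /andP [fF fa] /andP [_ fb].
    have : 0 < #|f| by rewrite cF.
    case/card_gt0P => v vf.
    move: (subsetP fa v vf) (subsetP fb v vf); rewrite !inE => c1 c2'.
    by move: nab; rewrite (connect_trans c1 _) // csym.
  have eAB : e \notin A :|: B.
    rewrite !inE negb_or; apply/andP; split; apply/negP => /andP [_ /subsetP sub].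
      by move: (sub b); rewrite De !inE eqxx orbT => /(_ isT); apply/negP.
    by move: (sub a); rewrite De !inE eqxx => /(_ isT); rewrite csym; apply/negP.
  have sub2 : e |: (A :|: B) \subset edgesin F' (comp F' u).
    apply/subsetP => f; rewrite !inE => /orP [/eqP->|].
      rewrite ?eqxx ?setU11 /=; apply/subsetP => v /ine [->|->]; by rewrite inE.
    have hc z : connect (adj F') u z -> comp F z \subset comp F' u.
      move=> cz; apply/subsetP => w; rewrite !inE => /mono; exact: connect_trans.
    case/orP=> /andP [fF fs]; rewrite fF orbT /=; apply: subset_trans fs _;
      exact: hc.
  have := subset_leq_card sub1; have := subset_leq_card sub2.
  rewrite cardsU1 eAB [#|comp F a :|: _|]cardsU [#|A :|: B|]cardsU AB0 cards0 subn0.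
  have := CF a; have := CF b; rewrite -/A -/B.
  move=> h1 h2 h3 h4; apply: leq_trans h4 _.
  apply: leq_trans (leq_subr _ _) _; apply: leq_trans (leq_add h2 h1) _.
  by rewrite addSn ltnS addnS -add1n.
have sub1 : comp F' u \subset comp F u.
  apply/subsetP => v; rewrite inE; apply: connect_closed; first by rewrite inE connect0.
  move=> v1 w; rewrite !inE => c /stepF' [adjF|[/ine [Hv|Hv] _]].
  - exact: connect_trans c (connect1 adjF).
  - by move: H; rewrite -Hv c.
  - by move: H; rewrite -Hv c orbT.
have sub0 : comp F u \subset comp F' u.
  by apply/subsetP => v; rewrite !inE; exact: mono.
have sub2 : edgesin F (comp F u) \subset edgesin F' (comp F' u).
  apply/subsetP => f; rewrite !inE => /andP [fF fs].
  by rewrite fF orbT /= (subset_trans fs sub0).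
apply: leq_trans (subset_leq_card sub1) _; apply: leq_trans (CF u) _.
by rewrite ltnS subset_leq_card.
Qed.

Lemma kstep_sub F e : kstep F e \subset e |: F.
Proof. by rewrite /kstep; case: ifP => _; rewrite ?subsetUr. Qed.

Lemma kfold_count (t : seq {set V}) F0 : (forall g, g \in t -> #|g| = 2) ->
  (forall f, f \in F0 -> #|f| = 2) -> Count F0 -> Count (foldl kstep F0 t).
Proof.
elim: t F0 => [|g t IH] F0 //= ct cF CF; apply: IH.
- by move=> h ht; apply: ct; rewrite inE ht orbT.
- move=> f /(subsetP (kstep_sub F0 g)) /setU1P [->|]; last exact: cF.
  by apply: ct; rewrite inE eqxx.
- by apply: kstep_count => //; apply: ct; rewrite inE eqxx.
Qed.

Lemma comp_bound EH F u0 : F \subset EH -> Count F ->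
  (forall f, f \in EH -> forall u v, u \in f -> v \in f -> connect (adj F) u v) ->
  #|verts [set f in F | f \subset [set v in verts EH | connect (adj EH) u0 v]]|
  <= #|[set f in F | f \subset [set v in verts EH | connect (adj EH) u0 v]]|.+1.
Proof.
move=> sF CF Conn.
set S := [set v in verts EH | connect (adj EH) u0 v].
set Q := [set f in F | f \subset S].
have s1 : verts Q \subset comp F u0.
  apply/subsetP => v /bigcupP [f]; rewrite inE => /andP [_ fS] vf.
  move: (subsetP fS v vf); rewrite !inE => /andP [_].
  apply: connect_sub => a b /andP [_ H]; by apply: (Conn _ H); rewrite !inE eqxx ?orbT.
have s2 : edgesin F (comp F u0) \subset Q.
  apply/subsetP => f; rewrite !inE => /andP [fF fc]; rewrite fF /=.
  apply/subsetP => v vf; rewrite inE; apply/andP; split.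
    by apply/bigcupP; exists f => //; apply: (subsetP sF).
  by move: (subsetP fc v vf); rewrite inE; apply: adj_mono.
apply: leq_trans (subset_leq_card s1) _; apply: leq_trans (CF u0) _.
by rewrite ltnS subset_leq_card.
Qed.

Lemma prune_bound (R : realType) (x : V -> R) M Q : Q \subset M ->
  #|verts Q| <= #|Q|.+1 ->
  #|verts [set f in Q | f \in prune x M]| <= #|[set f in Q | f \in prune x M]|.+1.
Proof.
move=> sQ bQ; set Tf := [set f in Q | f \in prune x M].
case: (pickP (fun _ : V => true)) => [i0 _|none]; last first.
  suff -> : verts Tf = set0 by rewrite cards0.
  by apply/setP => v; move: (none v).
set P := Q :\: Tf.
pose leaf f := odflt i0 [pick i in f | degree M i == 1%N].
have uniqdeg i f g : degree M i == 1%N -> f \in M -> i \in f -> g \in M -> i \in g -> f = g.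
  move=> /cards1P [h Hh] fM fi gM gi.
  have : f \in [set e in M | i \in e] by rewrite inE fM fi.
  have : g \in [set e in M | i \in e] by rewrite inE gM gi.
  by rewrite Hh !inE => /eqP -> /eqP ->.
have leafP f : f \in P -> [/\ leaf f \in f, degree M (leaf f) == 1%N & f \in M].
  rewrite !inE => /andP [nT fQ]; rewrite fQ /= in nT.
  have fM := subsetP sQ f fQ.
  rewrite /leaf; case: pickP => [i /andP [if1 di]|none] //=.
  move: nT; rewrite fM /= => /negP; case.
  apply/forallP => i; apply/implyP => ifi; move: (none i); rewrite ifi /=.
  by move=> ->.
have inj : {in P &, injective leaf}.
  move=> f g /leafP [lf df fM] /leafP [lg dg gM] e.
  by apply: (uniqdeg (leaf f)) => //; rewrite e.
have sub : leaf @: P \subset verts Q :\: verts Tf.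
  apply/subsetP => _ /imsetP [f fP ->]; have [lf df fM] := leafP f fP.
  have fQ : f \in Q by move: fP; rewrite inE => /andP [].
  rewrite inE; apply/andP; split; last by apply/bigcupP; exists f.
  apply/negP => /bigcupP [g]; rewrite inE => /andP [gQ gT] lg.
  have gf : g = f by apply: (uniqdeg (leaf f)) => //; apply: (subsetP sQ).
  by move: fP; rewrite -gf inE (_ : g \in Tf) // inE gQ gT.
have := subset_leq_card sub; rewrite card_in_imset //.
have sTQ : Tf \subset Q by apply/subsetP => f; rewrite inE => /andP [].
have svT : verts Tf \subset verts Q.
  apply/subsetP => v /bigcupP [f fT vf]; apply/bigcupP; exists f => //.
  exact: (subsetP sTQ).
have e1 := cardsID Tf Q; have e2 := cardsID (verts Tf) (verts Q).
move: e1 e2; rewrite (setIidPr sTQ) (setIidPr svT) -/P.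
move: bQ => h1 h2 h3 h4.
have h5 := leq_add (leqnn #|verts Tf|) h4; rewrite h3 in h5.
rewrite -h2 in h1; have h6 := leq_trans h5 h1.
by rewrite -(leq_add2r #|P|) addSn.
Qed.

Definition compo EH u := [set v in verts EH | connect (adj EH) u v].

End G.

Local Open Scope ring_scope.

Theorem lemma6p3 (R : realType) (V : finType) (E : {set {set V}})
  (w : {set V} -> R) (x : V -> R) (y : {set V} -> R)
  (VC : {set V}) (s : seq {set V}) (r : nat) :
  simple_graph E ->
  (forall e, e \in E -> 0 <= w e <= 1) ->
  lp_optimal E w x y ->
  is_component (Gstar_edges E y) (Gstar_verts x) VC ->
  induced (Gstar_edges E y) VC != set0 ->
  perm_eq s (enum (induced (Gstar_edges E y) VC)) ->
  sorted (fun a b => w a <= w b) s ->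
  (1 <= r <= size s)%N ->
  let M := kruskal s in
  let T := prune x M in
  let EH := [set e | e \in take r s] in
  \sum_(S in components EH)
      ((#|verts (tree_part T EH S)|)%:R - (#|tree_part T EH S|)%:R)
  <= \sum_(i in verts EH) x i - \sum_(e in EH) y e.
Proof.
move=> sG _ [feas _] _ _ ps _ _; cbv zeta.
set M := kruskal s; set T := prune x M; set EH := [set e | e \in take r s].
case: feas => h1 h2 h3 h4.
have hsE f : f \in s -> f \in E.
  by rewrite (perm_mem ps) mem_enum !inE => /andP [/andP []].
have us : uniq s by rewrite (perm_uniq ps) enum_uniq.
have c2 f : f \in s -> #|f| = 2%N by move=> fs; apply: sG; apply: hsE.
have EHE f : (f \in EH) = (f \in take r s) by rewrite inE.
have hT : T = prune x M by [].
have hM : M = foldl (@kstep V) (foldl (@kstep V) set0 (take r s)) (drop r s).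
  by rewrite /M kruskalE -foldl_cat cat_take_drop.
clearbody T EH M.
set F := foldl (@kstep V) set0 (take r s).
have c2t g : g \in take r s -> #|g| = 2%N by move=> gt; apply: c2 (mem_take gt).
have c2EH f : f \in EH -> #|f| = 2%N by rewrite EHE; apply: c2t.
have EHs f : f \in EH -> f \in E by rewrite EHE => /mem_take; apply: hsE.
have FEH : F \subset EH.
  apply: subset_trans (kfold_sub _ _) _; apply/subsetP => f.
  by rewrite set0U inE EHE.
have FM : F \subset M by rewrite hM kfold_mono.
have MEH f : f \in M -> f \in EH -> f \in F.
  rewrite hM => /(subsetP (kfold_sub _ _)) /setUP [//|]; rewrite inE EHE => fd ft.
  move: us; rewrite -(cat_take_drop r s) cat_uniq => /and3P [_ /hasPn H _].
  by move: (H f fd); rewrite ft.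
have CountF : Count F by apply: kfold_count => //; [move=> f; rewrite in_set0|exact: Count0].
have Conn f : f \in EH -> forall u v, u \in f -> v \in f -> connect (adj F) u v.
  by rewrite EHE => ft u v uf vf; apply: kfold_conn ft uf vf.
have vEH f v : f \in EH -> v \in f -> v \in verts EH.
  by move=> fE vf; apply/bigcupP; exists f.
have edge_sub f v : f \in EH -> v \in f -> f \subset compo EH v.
  move=> fE vf; apply/subsetP => z zf; rewrite inE (vEH f z fE zf) /=.
  have [->|vz] := eqVneq v z; first exact: connect0.
  by apply: connect1; rewrite /adj vz -(edge2 (c2EH f fE) vf zf vz).
have compsP S : S \in components EH -> exists2 u, u \in verts EH & S = compo EH u.
  by case/imsetP => u uV Su; exists u.
have compS S i : S \in components EH -> (i \in S) = (i \in verts EH) && (compo EH i == S).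
  case/compsP => u uV ->; rewrite inE.
  case iV: (i \in verts EH) => //=; apply/idP/eqP => [cui|Hc].
    apply/setP => z; rewrite !inE; case: (z \in verts EH) => //=.
    apply/idP/idP => [ciz|cuz]; first exact: connect_trans cui ciz.
    by apply: connect_trans cuz; rewrite csym.
  have : i \in compo EH i by rewrite inE iV connect0.
  by rewrite Hc inE => /andP [].
have dV : \sum_(i in verts EH) x i = \sum_(S in components EH) \sum_(i in S) x i.
  rewrite (partition_big (compo EH) (mem (components EH))) /=; last first.
    by move=> i iV; apply/imsetP; exists i.
  by apply: eq_bigr => S SC; apply: eq_bigl => i; rewrite (compS S i SC).
pose pe (f : {set V}) := if [pick v in f] is Some v then compo EH v else set0.
have pe_sp f : f \in EH -> exists2 v, v \in f & pe f = compo EH v.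
  move=> fE; rewrite /pe; case: pickP => [v vf|none]; first by exists v.
  have : (0 < #|f|)%N by rewrite c2EH.
  by case/card_gt0P => v vf; move: (none v); rewrite vf.
have dE : \sum_(f in EH) y f =
    \sum_(S in components EH) \sum_(f in EH | f \subset S) y f.
  rewrite (partition_big pe (mem (components EH))) /=; last first.
    move=> f fE; have [v vf ->] := pe_sp f fE; apply/imsetP; exists v => //.
    exact: vEH vf.
  apply: eq_bigr => S SC; apply: eq_bigl => f.
  case fE: (f \in EH) => //=; have [v vf ->] := pe_sp f fE.
  apply/eqP/idP => [<-|fS]; first exact: edge_sub.
  by move: (subsetP fS v vf); rewrite compS // => /andP [_ /eqP].
rewrite dV dE -sumrB; apply: ler_sum => S SC.
have [u uV DS] := compsP S SC.
have tpE : tree_part T EH S = [set f in [set f in F | f \subset S] | f \in prune x M].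
  apply/setP => f; rewrite /tree_part -hT !in_set; apply/idP/idP.
    case/and3P => fE fS fT; rewrite fS fT !andbT /=; apply: MEH fE.
    by move: fT; rewrite hT inE => /andP [].
  by case/andP => /andP [fF fS] fT; rewrite fS fT (subsetP FEH _ fF).
have nb : (#|verts (tree_part T EH S)| <= #|tree_part T EH S|.+1)%N.
  rewrite tpE; apply: prune_bound.
    by apply/subsetP => f; rewrite inE => /andP [/(subsetP FM)].
  rewrite DS; exact: comp_bound.
have nbR : (#|verts (tree_part T EH S)|%:R : R) <= #|tree_part T EH S|%:R + 1.
  by rewrite natr1 ler_nat.
have ne : induced E S != set0.
  apply/set0Pn; case/bigcupP: uV => f fE uf; exists f.
  by rewrite inE (EHs f fE) DS edge_sub.
have lp := h2 S ne.
have le : \sum_(f in EH | f \subset S) y f <= \sum_(f in induced E S) y f.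
  rewrite (big_setID EH) /=.
  have -> : \sum_(f in induced E S :&: EH) y f = \sum_(f in EH | f \subset S) y f.
    apply: eq_bigl => f; rewrite !in_set; case fE: (f \in EH); last by rewrite andbF.
    by rewrite (EHs f fE) andbT.
  rewrite lerDl; apply: sumr_ge0 => f; rewrite !in_set => /andP [_ /andP [fE _]].
  by case/andP: (h4 f fE).
lra.
Qed.
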